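(* Let $\rho_{\mathrm W}=\frac{1-\eta}{4}\mathbb{1}\otimes\mathbb{1}+\eta|\psi^-\rangle\langle\psi^-|$ be the two-qubit Werner state, where $|\psi^-\rangle=\frac{1}{\sqrt2}(|01\rangle-|10\rangle)$ and $\eta\in[0,1]$. Let $\pm\vec n_1,\dots,\pm\vec n_6$ be the 12 vertices of a regular icosahedron inscribed in the unit sphere of $\mathbb{R}^3$. Suppose the assemblage generated on Bob's side by Alice's six projective measurements of the observables $\vec n_k\cdot\vec\sigma$, $k=1,\dots,6$, admits a local hidden state model. Then $$\eta\le \frac{3+\sqrt5}{3(1+\sqrt5)}\approx 0.5393.$$
   Context: $\vec\sigma=(\sigma_x,\sigma_y,\sigma_z)$ denotes the vector of Pauli matrices. A local hidden state model for an assemblage $\{\sigma_{i|X}\}$ means that there exist: - a probability distribution $\{\kappa_\lambda\}$, - response distributions $p^{(\lambda)}_i(x)$, - qubit density matrices $\rho^{(\lambda)}$, such that $\sigma_{i|X}=\sum_\lambda\kappa_\lambda p^{(\lambda)}_i(x)\rho^{(\lambda)}$ for every measurement $X$ in the given set and every outcome $i$. The assemblage is defined by $\sigma_{i|X}=\mathrm{Tr}_A[(\Pi^X_i\otimes\mathbb{1})\rho_{\mathrm W}]$, where $\Pi^X_i$ are the eigenprojectors of the observable $X$. *)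

(* Defs.v *)
(* Complex numbers: an arbitrary numClosedFieldType C
   (e.g. the complex numbers); "real" means an element of Num.real. *)
From HB Require Import structures.
From mathcomp Require Import all_boot all_order all_algebra.
Set Implicit Arguments. Unset Strict Implicit. Unset Printing Implicit Defensive.
Import Order.TTheory GRing.Theory Num.Theory.
Local Open Scope ring_scope.

Section Qubits.
Variable C : numClosedFieldType.

Definition adj {m n} (A : 'M[C]_(m, n)) : 'M[C]_(n, m) :=
  \matrix_(i, j) (A j i)^*.

Definition sigx : 'M[C]_2 := \matrix_(i, j) (if i != j then 1 else 0).
Definition sigy : 'M[C]_2 :=
  \matrix_(i, j) (if (i == 0 :> nat) && (j == 1 :> nat) then - 'i
                  else if (i == 1 :> nat) && (j == 0 :> nat) then 'i else 0).
Definition sigz : 'M[C]_2 :=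
  \matrix_(i, j) (if i == j then (if i == 0 :> nat then 1 else -1) else 0).

(* n . sigma for a vector n in R^3 (stored as a column of C with real entries) *)
Definition ndotsig (n : 'cV[C]_3) : 'M[C]_2 :=
  n 0 0 *: sigx + n 1 0 *: sigy + n 2%:R 0 *: sigz.

(* eigenprojectors of n.sigma for a real unit vector n:
   outcome i = 0 is eigenvalue +1, outcome i = 1 is eigenvalue -1 *)
Definition proj_n (n : 'cV[C]_3) (i : 'I_2) : 'M[C]_2 :=
  2^-1 *: (1%:M + (-1) ^+ i *: ndotsig n).

(* Two-qubit space C^2 (x) C^2 = C^4, basis |ab> has index 2a+b. *)
Definition idx (a b : 'I_2) : 'I_4 := inord (2 * a + b).
Definition fst_ (i : 'I_4) : 'I_2 := inord (i %/ 2).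
Definition snd_ (i : 'I_4) : 'I_2 := inord (i %% 2).

Definition kron (A B : 'M[C]_2) : 'M[C]_4 :=
  \matrix_(i, j) (A (fst_ i) (fst_ j) * B (snd_ i) (snd_ j)).

Definition ptraceA (M : 'M[C]_4) : 'M[C]_2 :=
  \matrix_(i, j) \sum_(a < 2) M (idx a i) (idx a j).

Definition psi_minus : 'cV[C]_4 :=
  \col_i (if i == 1 :> nat then (sqrtC 2)^-1
          else if i == 2 :> nat then - (sqrtC 2)^-1 else 0).

Definition werner (eta : C) : 'M[C]_4 :=
  ((1 - eta) / 4%:R) *: 1%:M + eta *: (psi_minus *m adj psi_minus).

Definition assemblage (eta : C) (n : 'I_6 -> 'cV[C]_3) (k : 'I_6) (i : 'I_2)
  : 'M[C]_2 := ptraceA (kron (proj_n (n k) i) 1%:M *m werner eta).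

Definition is_density (r : 'M[C]_2) : Prop :=
  adj r = r /\ (forall x : 'cV[C]_2, 0 <= (adj x *m r *m x) 0 0) /\ \tr r = 1.

(* local hidden state model for an assemblage with measurements indexed by
   'I_6 and outcomes by 'I_2; hidden variable lambda ranges over 'I_N. *)
Definition has_LHS (sig : 'I_6 -> 'I_2 -> 'M[C]_2) : Prop :=
  exists (N : nat) (kappa : 'I_N -> C) (p : 'I_N -> 'I_6 -> 'I_2 -> C)
         (rho : 'I_N -> 'M[C]_2),
    (forall l, 0 <= kappa l) /\ \sum_l kappa l = 1 /\
    (forall l x i, 0 <= p l x i) /\ (forall l x, \sum_i p l x i = 1) /\
    (forall l, is_density (rho l)) /\
    (forall x i, sig x i = \sum_l (kappa l * p l x i) *: rho l).

(* standard regular icosahedron: vertices (0,+-1,+-phi), (+-1,+-phi,0),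
   (+-phi,0,+-1), scaled to the unit sphere; std_vert j (j < 6) together with
   their negatives give all 12 vertices. *)
Definition phi : C := (1 + sqrtC 5%:R) / 2%:R.
Definition vec3 (a b c : C) : 'cV[C]_3 :=
  \col_i (if i == 0 :> nat then a else if i == 1 :> nat then b else c).
Definition std_vert (j : 'I_6) : 'cV[C]_3 :=
  (sqrtC (1 + phi ^+ 2))^-1 *:
  (match val j with
   | 0 => vec3 0 1 phi
   | 1 => vec3 0 1 (- phi)
   | 2 => vec3 1 phi 0
   | 3 => vec3 1 (- phi) 0
   | 4 => vec3 phi 0 1
   | _ => vec3 (- phi) 0 1
   end).

Definition real_orthogonal (Q : 'M[C]_3) : Prop :=
  (forall i j, Q i j \is Num.real) /\ Q^T *m Q = 1%:M.

(* the 12 points +-n_1, ..., +-n_6 are exactly the vertices of a regular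
   icosahedron inscribed in the unit sphere (image of the standard one under
   an orthogonal map) *)
Definition icosahedron_axes (n : 'I_6 -> 'cV[C]_3) : Prop :=
  exists Q : 'M[C]_3, real_orthogonal Q /\
    forall x : 'cV[C]_3,
      (exists (k : 'I_6) (s : bool), x = (-1) ^+ s *: n k) <->
      (exists (j : 'I_6) (s : bool), x = (-1) ^+ s *: (Q *m std_vert j)).

End Qubits.

(* Main.v *)
Require Import Defs.
From HB Require Import structures.
From mathcomp Require Import all_boot all_order all_algebra.
From mathcomp Require Import ring lra.
Set Implicit Arguments. Unset Strict Implicit. Unset Printing Implicit Defensive.
Import Order.TTheory GRing.Theory Num.Theory.
Local Open Scope ring_scope.

Definition dot3 {R : pzRingType} (x y z a b c : R) := x * a + y * b + z * c.

Section RS.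
Variable C : numClosedFieldType.
Record RR := mkR { rval : C; rvalP : rval \is Num.real }.
HB.instance Definition _ := [isSub for rval].
HB.instance Definition _ := [Choice of RR by <:].
HB.instance Definition _ := [SubChoice_isSubComUnitRing of RR by <:].
HB.instance Definition _ := [SubComUnitRing_isSubIntegralDomain of RR by <:].
HB.instance Definition _ := [SubIntegralDomain_isSubField of RR by <:].
Check (fun x y : RR => x / y).
Definition Rle (x y : RR) := rval x <= rval y.
Definition Rlt (x y : RR) := rval x < rval y.
Definition Rnorm (x : RR) : RR := mkR (normr_real (rval x)).
Lemma rval0 : rval (0 : RR) = 0. Proof. by []. Qed.
Lemma rvalD (x y : RR) : rval (x + y) = rval x + rval y. Proof. by []. Qed.
Lemma rvalM (x y : RR) : rval (x * y) = rval x * rval y. Proof. by []. Qed.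
Lemma rvalN (x : RR) : rval (- x) = - rval x. Proof. by []. Qed.
Lemma rval_inj : injective rval. Proof. exact: val_inj. Qed.
Fact Rle0_add x y : Rle 0 x -> Rle 0 y -> Rle 0 (x + y).
Proof. rewrite /Rle rvalD; exact: addr_ge0. Qed.
Fact Rle0_mul x y : Rle 0 x -> Rle 0 y -> Rle 0 (x * y).
Proof. rewrite /Rle rvalM; exact: mulr_ge0. Qed.
Fact Rle0_anti x : Rle 0 x -> Rle x 0 -> x = 0.
Proof. rewrite /Rle => a b; apply: rval_inj; by apply/eqP; rewrite eq_le a b. Qed.
Fact Rsub_ge0 x y : Rle 0 (y - x) = Rle x y.
Proof. by rewrite /Rle rvalD rvalN subr_ge0. Qed.
Fact Rle0_total x : Rle 0 x || Rle x 0.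
Proof. by rewrite /Rle; have := rvalP x; rewrite realE. Qed.
Fact RnormN x : Rnorm (- x) = Rnorm x.
Proof. apply: rval_inj => /=; exact: (normrN (rval x)). Qed.
Fact Rge0_norm x : Rle 0 x -> Rnorm x = x.
Proof. by rewrite /Rle => h; apply: rval_inj; rewrite /= ger0_norm. Qed.
Fact Rlt_def x y : Rlt x y = (y != x) && Rle x y.
Proof. by rewrite /Rlt /Rle lt_def. Qed.
HB.instance Definition _ := Num.IntegralDomain_isLeReal.Build RR
  Rle0_add Rle0_mul Rle0_anti Rsub_ge0 Rle0_total RnormN Rge0_norm Rlt_def.
End RS.

Section Core.
Variable R : realFieldType.

Lemma lin_bound (x y z a b c lam : R) : 0 < lam -> a^+2+b^+2+c^+2 <= 1 ->
  x^+2+y^+2+z^+2 <= lam^+2 -> dot3 x y z a b c <= lam.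
Proof.
move=> hl hu hA; rewrite /dot3.
have h1 := sqr_ge0 (x - lam* a); have h2 := sqr_ge0 (y - lam*b);
have h3 := sqr_ge0 (z - lam*c).
have : 2 * lam * (x* a+y*b+z*c) <= 2 * lam * lam by nra.
move=> h; rewrite -(ler_pM2l (_ : 0 < 2 * lam)) //; nra.
Qed.

Lemma sgn (x : R) (s : bool) : ((-1) ^+ s * x) = if s then - x else x.
Proof. by case: s; rewrite ?expr0 ?expr1 ?mul1r ?mulN1r. Qed.

Lemma core (a b c p K : R) : p* p = p + 1 -> 0 < p -> K*K = p + 2 -> 0 <= K ->
  a^+2+b^+2+c^+2 <= 1 ->
  `|dot3 0 1 p a b c| + `|dot3 0 1 (-p) a b c| + `|dot3 1 p 0 a b c|
  + `|dot3 1 (-p) 0 a b c| + `|dot3 p 0 1 a b c| + `|dot3 (-p) 0 1 a b c|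
  <= 2 * p * K.
Proof.
move=> hp p0 hK K0 hu.
have lam2 : (2* p*K)^+2 = 16 * p + 12.
  have -> : (2 * p * K)^+2 = 4 * (p * p) * (K * K) by ring.
  rewrite hK hp; nra.
have lam0 : 0 < 2 * p * K.
  rewrite !pmulr_rgt0 //; rewrite lt_def K0 andbT; apply/eqP=> K00.
  by move: hK; rewrite K00 mul0r => /eqP; rewrite eq_sym; apply/negP; rewrite gt_eqF // ltr_wpDl // ltW.
rewrite !(normrEsign (dot3 _ _ _ _ _ _)).
set s0 := (_ < 0); set s1 := (_ < 0); set s2 := (_ < 0); set s3 := (_ < 0); set s4 := (_ < 0); set s5 := (_ < 0).
move: s0 s1 s2 s3 s4 s5 => s0 s1 s2 s3 s4 s5.
set e0 := (-1) ^+ s0; set e1 := (-1) ^+ s1; set e2 := (-1) ^+ s2;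
set e3 := (-1) ^+ s3; set e4 := (-1) ^+ s4; set e5 := (-1) ^+ s5.
rewrite (_ : _ + _ = dot3 (e2 + e3 + e4 * p - e5 * p) (e0 + e1 + e2 * p - e3 * p)
   (e0 * p - e1 * p + e4 + e5) a b c); last by rewrite /dot3; ring.
apply: lin_bound => //; rewrite lam2 {}/e0 {}/e1 {}/e2 {}/e3 {}/e4 {}/e5.
case: s0; case: s1; case: s2; case: s3; case: s4; case: s5;
  rewrite ?expr0 ?expr1; nra.
Qed.
End Core.

Section Q.
Variable C : numClosedFieldType.
Definition o0 : 'I_2 := ord0.
Definition o1 : 'I_2 := ord_max.
Lemma I2P (i : 'I_2) : i = o0 \/ i = o1.
Proof. case: i => [[|[|//]]] hi; [left|right]; exact: val_inj. Qed.
Lemma sum2 (F : 'I_2 -> C) : \sum_(i < 2) F i = F o0 + F o1.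
Proof. rewrite !big_ord_recr big_ord0 /= add0r; by congr (_ + _); congr F; apply: val_inj. Qed.
Lemma val_idx (a b : 'I_2) : val (idx a b) = (2 * a + b)%N.
Proof. by rewrite /idx /= inordK // ; case: (I2P a) => ->; case: (I2P b) => ->. Qed.
Lemma sum4 (F : 'I_4 -> C) : \sum_(c < 4) F c =
  F (idx o0 o0) + F (idx o0 o1) + F (idx o1 o0) + F (idx o1 o1).
Proof.
rewrite !big_ord_recr big_ord0 /= add0r.
by congr (_ + _ + _ + _); congr F; apply: val_inj; rewrite val_idx.
Qed.
Lemma fst_idx a b : fst_ (idx a b) = a.
Proof.
apply: val_inj; rewrite /fst_ /= inordK (val_idx a b);
 by case: (I2P a) => ->; case: (I2P b) => ->.
Qed.
Lemma snd_idx a b : snd_ (idx a b) = b.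
Proof.
apply: val_inj; rewrite /snd_ /= inordK (val_idx a b);
 by case: (I2P a) => ->; case: (I2P b) => ->.
Qed.
Lemma idx_inj a b c d : (idx a b == idx c d) = (a == c) && (b == d).
Proof.
rewrite -val_eqE !val_idx.
by case: (I2P a) => ->; case: (I2P b) => ->; case: (I2P c) => ->; case: (I2P d) => ->.
Qed.

Lemma sqrt2_inv : (sqrtC (2 : C))^-1 * (sqrtC 2)^-1 = 2^-1.
Proof. by rewrite -invfM -expr2 sqrtCK. Qed.
Lemma conj_sqrt2_inv : ((sqrtC (2 : C))^-1)^* = (sqrtC 2)^-1.
Proof. by apply/conj_Creal/ger0_real; rewrite invr_ge0 sqrtC_ge0 ler0n. Qed.

Lemma conjNs2 : (- (sqrtC (2 : C))^-1)^* = - (sqrtC 2)^-1.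
Proof. by apply/conj_Creal; rewrite rpredN; apply/ger0_real; rewrite invr_ge0 sqrtC_ge0 ler0n. Qed.

Lemma werner_entry (eta : C) a b c d : werner eta (idx a b) (idx c d) =
  ((1 - eta) / 4%:R) * ((a == c) && (b == d))%:R
  + eta * (if (a != b) && (c != d) then (if a == c then 2^-1 else - 2^-1) else 0).
Proof.
rewrite /werner !mxE idx_inj big_ord1 /adj !mxE !val_idx.
case: (I2P a) => ->; case: (I2P b) => ->; case: (I2P c) => ->; case: (I2P d) => -> /=;
 rewrite ?conjNs2 ?conj_sqrt2_inv ?rmorph0 ?rmorphN ?conj_sqrt2_inv ?mulr0 ?mul0r ?mulrN ?mulNr ?opprK ?sqrt2_inv ?addr0 ?add0r ?mulr1 //; ring.
Qed.

Lemma ptrace_werner (eta : C) (P : 'M[C]_2) :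
  ptraceA (kron P 1%:M *m werner eta) =
  ((1 - eta) / 4%:R * \tr P) *: 1%:M + (eta / 2) *: (\tr P *: 1%:M - P).
Proof.
have wE := werner_entry eta; move: (werner eta) wE => W wE.
apply/matrixP => i j; rewrite /ptraceA /kron !mxE sum2 /mxtrace sum2 !mxE !sum4 !mxE.
rewrite !fst_idx !snd_idx !wE.
by case: (I2P i) => ->; case: (I2P j) => -> /=; ring.
Qed.

Lemma ndotsig2 (m : 'cV[C]_3) :
  ndotsig m *m ndotsig m = (m 0 0 ^+ 2 + m 1 0 ^+ 2 + m 2%:R 0 ^+ 2) *: 1%:M.
Proof.
apply/matrixP => i j; rewrite !mxE sum2 !mxE /=.
have hI := sqrCi C; move: ('i) hI => I hI.
case: (I2P i) => ->; case: (I2P j) => -> /=; try ring;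
 apply/eqP; rewrite -subr_eq0; apply/eqP;
 (transitivity ((I ^+ 2 + 1) * (- m 1 0 ^+ 2)); [ring | by rewrite hI addNr mul0r]).
Qed.

Lemma assem_diff eta (n : 'I_6 -> 'cV[C]_3) k :
  assemblage eta n k o0 - assemblage eta n k o1 = - (eta / 2) *: ndotsig (n k).
Proof.
rewrite /assemblage !ptrace_werner.
apply/matrixP => i j; rewrite !mxE /mxtrace !sum2 !mxE /=.
rewrite !expr0 !expr1.
case: (I2P i) => ->; case: (I2P j) => -> /=; by field.
Qed.

Lemma s5_ge0 : 0 <= sqrtC (5%:R : C).
Proof. by rewrite sqrtC_ge0 ler0n. Qed.
Lemma phi_real : phi C \is Num.real.
Proof. rewrite /phi; apply: rpredM; last by rewrite rpredV realn.
by rewrite rpredD ?real1 // ger0_real // s5_ge0. Qed.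
Lemma phi_gt0 : 0 < phi C.
Proof.
rewrite /phi divr_gt0 ?ltr0n //.
by apply: (lt_le_trans ltr01); rewrite lerDl s5_ge0.
Qed.
Lemma phi_sq : phi C * phi C = phi C + 1.
Proof.
apply/eqP; rewrite -subr_eq0; apply/eqP.
rewrite (_ : _ - _ = (sqrtC (5%:R : C) ^+ 2 - 5%:R) / 4%:R); last by rewrite /phi; field.
by rewrite sqrtCK subrr mul0r.
Qed.
Definition KK : C := sqrtC (1 + phi C ^+ 2).
Lemma KK_ge0 : 0 <= KK.
Proof. by rewrite /KK sqrtC_ge0 addr_ge0 ?ler01 // -realEsqr phi_real. Qed.
Lemma KK_real : KK \is Num.real. Proof. exact: ger0_real KK_ge0. Qed.
Lemma KK_sq : KK * KK = phi C + 2%:R.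
Proof. by rewrite -expr2 /KK sqrtCK expr2 phi_sq; ring. Qed.
Lemma KK_neq0 : KK != 0.
Proof.
apply/eqP => h; have := KK_sq; rewrite h mul0r => /eqP.
by rewrite eq_sym gt_eqF // addr_gt0 ?phi_gt0 ?ltr0n.
Qed.

Definition phiR : RR C := mkR phi_real.
Definition KR : RR C := mkR KK_real.
Lemma phiR_sq : phiR * phiR = phiR + 1.
Proof. by apply: rval_inj; rewrite /= phi_sq. Qed.
Lemma phiR_gt0 : 0 < phiR. Proof. exact: phi_gt0. Qed.
Lemma KR_sq : KR * KR = phiR + 2%:R.
Proof. apply: rval_inj; rewrite /= KK_sq. by []. Qed.
Lemma KR_ge0 : 0 <= KR. Proof. exact: KK_ge0. Qed.
Lemma phi_gt1 : 1 < phi C.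
Proof. have h1 := phiR_sq; have h2 := phiR_gt0. have : (1 : RR C) < phiR by nra. by []. Qed.

Lemma coreC (a b c : C) : a \is Num.real -> b \is Num.real -> c \is Num.real ->
  a ^+ 2 + b ^+ 2 + c ^+ 2 <= 1 ->
  `|dot3 0 1 (phi C) a b c| + `|dot3 0 1 (- phi C) a b c| + `|dot3 1 (phi C) 0 a b c|
  + `|dot3 1 (- phi C) 0 a b c| + `|dot3 (phi C) 0 1 a b c| + `|dot3 (- phi C) 0 1 a b c|
  <= 2%:R * phi C * KK.
Proof.
move=> ha hb hc hu.
have hu' : (mkR ha) ^+ 2 + (mkR hb) ^+ 2 + (mkR hc) ^+ 2 <= 1 by [].
exact: (core phiR_sq phiR_gt0 KR_sq KR_ge0 hu').
Qed.


Definition dotv (m r : 'cV[C]_3) : C := (m^T *m r) 0 0.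
Lemma sum3 (F : 'I_3 -> C) : \sum_(i < 3) F i = F 0 + F 1 + F 2%:R.
Proof. rewrite !big_ord_recr big_ord0 /= add0r.
by congr (_ + _ + _); congr F; apply: val_inj. Qed.
Lemma dotvE m r : dotv m r = m 0 0 * r 0 0 + m 1 0 * r 1 0 + m 2%:R 0 * r 2%:R 0.
Proof. by rewrite /dotv mxE sum3 !mxE. Qed.
Lemma dotv_vec3 a b c r : dotv (vec3 a b c) r = dot3 a b c (r 0 0) (r 1 0) (r 2%:R 0).
Proof. by rewrite dotvE !mxE. Qed.
Lemma dotvZ x m r : dotv (x *: m) r = x * dotv m r.
Proof. rewrite !dotvE !mxE; ring. Qed.
Lemma dotvZr x m r : dotv m (x *: r) = x * dotv m r.
Proof. rewrite !dotvE !mxE; ring. Qed.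
Lemma dotvC m r : dotv m r = dotv r m.
Proof. rewrite !dotvE; ring. Qed.
Lemma dotvM (Q : 'M[C]_3) v r : dotv (Q *m v) r = dotv v (Q^T *m r).
Proof. by rewrite /dotv trmx_mul mulmxA. Qed.

Definition wv (j : 'I_6) : 'cV[C]_3 :=
   match val j with
   | 0 => vec3 0 1 (phi C)
   | 1 => vec3 0 1 (- phi C)
   | 2 => vec3 1 (phi C) 0
   | 3 => vec3 1 (- phi C) 0
   | 4 => vec3 (phi C) 0 1
   | _ => vec3 (- phi C) 0 1
   end.
Lemma std_vertE j : std_vert C j = KK^-1 *: wv j.
Proof. by []. Qed.

Lemma sum6 (F : 'I_6 -> C) : \sum_(j < 6) F j =
  F (@Ordinal 6 0 isT) + F (@Ordinal 6 1 isT) + F (@Ordinal 6 2 isT)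
  + F (@Ordinal 6 3 isT) + F (@Ordinal 6 4 isT) + F (@Ordinal 6 5 isT).
Proof. rewrite !big_ord_recr big_ord0 /= add0r.
by congr (_ + _ + _ + _ + _ + _); congr F; apply: val_inj. Qed.

Lemma sum_std (u : 'cV[C]_3) : (forall i, u i 0 \is Num.real) -> dotv u u <= 1 ->
  \sum_j `|dotv (std_vert C j) u| <= 2%:R * phi C.
Proof.
move=> ur hu.
rewrite sum6 !std_vertE !dotvZ !normrM ger0_norm ?invr_ge0 ?KK_ge0 //.
rewrite -!mulrDr mulrC ler_pdivrMr; last by rewrite lt_def KK_neq0 KK_ge0.
rewrite /wv /= !dotv_vec3.
apply: coreC; rewrite ?ur // !expr2; by rewrite dotvE in hu.
Qed.

End Q.

Section N.
Variable C : numClosedFieldType.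

Lemma vec3_real (a b c : C) i j : a \is Num.real -> b \is Num.real -> c \is Num.real ->
  vec3 a b c i j \is Num.real.
Proof. by move=> ha hb hc; rewrite mxE; case: ifP => _ //; case: ifP. Qed.

Lemma wv_real j i : wv C j i 0 \is Num.real.
Proof.
have hp := phi_real C.
case: j => [[|[|[|[|[|[|//]]]]]] hj]; rewrite /wv /=;
  apply: vec3_real; rewrite ?rpredN ?real0 ?real1 //.
Qed.

Lemma std_real j i : std_vert C j i 0 \is Num.real.
Proof. by rewrite std_vertE mxE rpredM ?rpredV ?KK_real ?wv_real. Qed.

Lemma wv_norm j : dotv (wv C j) (wv C j) = KK C * KK C.
Proof.
rewrite KK_sq; have hp := phi_sq C.
case: j => [[|[|[|[|[|[|//]]]]]] hj]; rewrite /wv /= dotv_vec3 !mxE /= /dot3;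
  rewrite ?mulrNN hp; ring.
Qed.


Lemma std_inj (j1 j2 : 'I_6) (s : bool) :
  std_vert C j1 = (-1) ^+ s *: std_vert C j2 -> j1 = j2.
Proof.
rewrite !std_vertE => H.
have Ki : (KK C)^-1 != 0 by rewrite invr_eq0 KK_neq0.
have E0 := congr1 (fun M : 'M[C]_(3,1) => M 0 0) H; have E1 := congr1 (fun M : 'M[C]_(3,1) => M 1 0) H;
have E2 := congr1 (fun M : 'M[C]_(3,1) => M 2%:R 0) H; rewrite /= !mxE mulrCA in E0; rewrite /= !mxE mulrCA in E1; rewrite /= !mxE mulrCA in E2.
have {E0}E0 := mulfI Ki E0; have {E1}E1 := mulfI Ki E1; have {E2}E2 := mulfI Ki E2.
have p1 := phi_gt1 C.
have f1 : - phi C < -1 by rewrite ltrN2.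
have f2 : (-1 : C) < 0 by rewrite oppr_lt0 ltr01.
have f3 : (0 : C) < 1 := ltr01.
have f12 := lt_trans f1 f2; have f23 := lt_trans f2 f3; have f34 := lt_trans f3 p1.
have f13 := lt_trans f12 f3; have f24 := lt_trans f23 p1; have f14 := lt_trans f13 p1.
clear H.
move: j1 j2 E0 E1 E2 => [[|[|[|[|[|[|//]]]]]] h1] [[|[|[|[|[|[|//]]]]]] h2];
  rewrite /wv /= !mxE /=; case: s; rewrite ?expr0 ?expr1 ?mul1r ?mulN1r ?oppr0 ?opprK => E0 E1 E2;
  first [ by apply: val_inj
        | by move/eqP: E0; rewrite ?(lt_eqF f1, gt_eqF f1, lt_eqF f2, gt_eqF f2, lt_eqF f3, gt_eqF f3,
             lt_eqF p1, gt_eqF p1, lt_eqF f12, gt_eqF f12, lt_eqF f23, gt_eqF f23, lt_eqF f34, gt_eqF f34,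
             lt_eqF f13, gt_eqF f13, lt_eqF f24, gt_eqF f24, lt_eqF f14, gt_eqF f14)
        | by move/eqP: E1; rewrite ?(lt_eqF f1, gt_eqF f1, lt_eqF f2, gt_eqF f2, lt_eqF f3, gt_eqF f3,
             lt_eqF p1, gt_eqF p1, lt_eqF f12, gt_eqF f12, lt_eqF f23, gt_eqF f23, lt_eqF f34, gt_eqF f34,
             lt_eqF f13, gt_eqF f13, lt_eqF f24, gt_eqF f24, lt_eqF f14, gt_eqF f14)
        | by move/eqP: E2; rewrite ?(lt_eqF f1, gt_eqF f1, lt_eqF f2, gt_eqF f2, lt_eqF f3, gt_eqF f3,
             lt_eqF p1, gt_eqF p1, lt_eqF f12, gt_eqF f12, lt_eqF f23, gt_eqF f23, lt_eqF f34, gt_eqF f34,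
             lt_eqF f13, gt_eqF f13, lt_eqF f24, gt_eqF f24, lt_eqF f14, gt_eqF f14)
        ].
Qed.

Lemma sign_real (s : bool) : ((-1) ^+ s : C) \is Num.real.
Proof. by case: s; rewrite ?expr0 ?expr1 ?real1 ?rpredN ?real1. Qed.
Lemma sign_sq (s : bool) : ((-1) ^+ s : C) * (-1) ^+ s = 1.
Proof. by rewrite -signr_addb addbb expr0. Qed.

Lemma ico_facts (n : 'I_6 -> 'cV[C]_3) : icosahedron_axes n ->
  (forall k i, n k i 0 \is Num.real) /\ (forall k, dotv (n k) (n k) = 1) /\
  (forall r : 'cV[C]_3, (forall i, r i 0 \is Num.real) -> dotv r r <= 1 ->
     \sum_k `|dotv (n k) r| <= 2%:R * phi C).
Proof.
case=> Q [[Qr QQ] Hn].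
have QQ' : Q *m Q^T = 1%:M by apply: mulmx1C.
have fwd k : exists j (s : bool), n k = (-1) ^+ s *: (Q *m std_vert C j).
  have [] := (Hn (n k)).1; first by exists k, false; rewrite expr0 scale1r.
  by move=> j [s e]; exists j, s.
have Qv_r j i : (Q *m std_vert C j) i 0 \is Num.real.
  by rewrite mxE rpred_sum // => l _; rewrite rpredM ?std_real.
split; [|split].
- move=> k i; have [j [s ->]] := fwd k.
  rewrite mxE. apply: rpredM; [exact: sign_real | exact: Qv_r].
- move=> k; have [j [s ->]] := fwd k.
  rewrite dotvZ dotvZr mulrA sign_sq mul1r dotvM mulmxA QQ mul1mx.
  rewrite std_vertE dotvZ dotvZr wv_norm mulrA -invfM mulVf //.
  by rewrite mulf_neq0 ?KK_neq0.
- move=> r rr hr.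
  have bwd j : exists k, exists s : bool, Q *m std_vert C j = (-1) ^+ s *: n k.
    have [] := (Hn (Q *m std_vert C j)).2; first by exists j, false; rewrite expr0 scale1r.
    by move=> k [s e]; exists k, s.
  have [g Hg] := fin_all_exists bwd.
  have Hg' j : exists s : bool, n (g j) = (-1) ^+ s *: (Q *m std_vert C j).
    have [s e] := Hg j; exists s; by rewrite e scalerA sign_sq scale1r.
  have ginj : injective g.
    move=> j1 j2 e; have [s1 e1] := Hg j1; have [s2 e2] := Hg' j2.
    rewrite e e2 scalerA -signr_addb in e1.
    apply: (@std_inj _ _ (s1 (+) s2)).
    move/(congr1 (fun M => Q^T *m M)): e1.
    by rewrite scalemxAr !mulmxA QQ !mul1mx.
  rewrite (reindex_inj ginj) /=.
  have -> : \sum_j `|dotv (n (g j)) r| = \sum_j `|dotv (std_vert C j) (Q^T *m r)|.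
    apply: eq_bigr => j _; have [s ->] := Hg' j.
    by rewrite dotvZ normrM normr_sign mul1r dotvM.
  apply: sum_std.
    by move=> i; rewrite mxE rpred_sum // => l _; rewrite rpredM // mxE.
  by rewrite dotvM trmxK mulmxA QQ' mul1mx.
Qed.

Lemma bloch (rho : 'M[C]_2) : is_density rho ->
  exists r : 'cV[C]_3, (forall i, r i 0 \is Num.real) /\ dotv r r <= 1 /\
    forall m, \tr (ndotsig m *m rho) = dotv m r.
Proof.
case=> herm [psd tr1].
have hE i j : rho i j = (rho j i)^*.
  by move/matrixP/(_ i j): herm; rewrite mxE => <-.
set a := rho o0 o0; set b := rho o1 o1; set q := rho o1 o0.
have h01 : rho o0 o1 = q^* by rewrite hE.
have ar : a \is Num.real by apply/CrealP; rewrite /a -hE.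
have br : b \is Num.real by apply/CrealP; rewrite /b -hE.
have ab1 : a + b = 1 by rewrite -tr1 /mxtrace sum2.
have d0 : 0 <= a * b - q * q^*.
  pose x1 : 'cV[C]_2 := \col_i (if i == o0 then b else - q).
  pose x2 : 'cV[C]_2 := \col_i (if i == o0 then - q^* else a).
  have P1 := psd x1; have P2 := psd x2.
  rewrite /adj !mxE !sum2 !mxE !sum2 !mxE /= in P1 P2.
  have cNN : (- q^*)^* = - q by rewrite rmorphN /= conjCK.
  have cN : (- q)^* = - q^* by rewrite rmorphN.
  rewrite -/a -/b -/q h01 cNN cN (conj_Creal ar) (conj_Creal br) in P1 P2.
  have -> : a * b - q * q^* = (a + b) * (a * b - q * q^*) by rewrite ab1 mul1r.
  apply: le_trans (addr_ge0 P1 P2) _.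
  rewrite le_eqVlt; apply/orP; left; apply/eqP; ring.
exists (vec3 (q^* + q) ('i * (q^* - q)) (a - b)).
split; [|split].
- move=> i; apply: vec3_real.
  + by apply/CrealP; rewrite rmorphD /= conjCK addrC.
  + apply/CrealP; rewrite rmorphM rmorphB /= conjCK conjCi; ring.
  + exact: rpredB.
- rewrite dotv_vec3 !mxE /= /dot3.
  have hI := sqrCi C; move: ('i) hI => I hI.
  have -> : (q^* + q) * (q^* + q) + I * (q^* - q) * (I * (q^* - q)) + (a - b) * (a - b)
     = 1 - 4%:R * (a * b - q * q^*).
    apply/eqP; rewrite -subr_eq0; apply/eqP.
    transitivity ((I ^+ 2 + 1) * (q^* - q) ^+ 2 + ((a + b) ^+ 2 - 1)); first ring.
    by rewrite hI addNr mul0r ab1 expr1n subrr addr0.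
  by rewrite lerBlDr lerDl mulr_ge0 ?ler0n.
- move=> m; rewrite dotvC dotv_vec3 /mxtrace sum2 !mxE !sum2 !mxE /= -/a -/b -/q h01 /dot3.
  ring.
Qed.

End N.

Unset Implicit Arguments.
Set Strict Implicit.

Theorem mainTheorem6 (C : numClosedFieldType) (eta : C)
  (n : 'I_6 -> 'cV[C]_3) :
  0 <= eta -> eta <= 1 ->
  icosahedron_axes n ->
  has_LHS (assemblage eta n) ->
  eta <= (3%:R + sqrtC 5%:R) / (3%:R * (1 + sqrtC 5%:R)).
Proof.
move=> he0 he1 hico [N [ka [p [rho [hk [hk1 [hp [hp1 [hrho hsig]]]]]]]]].
have [nreal [nnorm nbound]] := ico_facts hico.
set B := 2%:R * phi C.
have Q k : \tr (ndotsig (n k) *m (assemblage eta n k o0 - assemblage eta n k o1)) = - eta.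
  rewrite assem_diff -scalemxAr linearZ /= ndotsig2 linearZ /= mxtrace1.
  have := nnorm k; rewrite dotvE -!expr2 => ->.
  by field.
set t := fun l k => \tr (ndotsig (n k) *m rho l).
set d := fun l k => p l k o0 - p l k o1.
have L k : \tr (ndotsig (n k) *m (assemblage eta n k o0 - assemblage eta n k o1))
    = \sum_l ka l * d l k * t l k.
  rewrite !hsig -sumrB mulmx_sumr raddf_sum; apply: eq_bigr => l _.
  by rewrite -scalerBl -mulrBr -scalemxAr /= mxtraceZ.
have tb l : exists r : 'cV[C]_3, (forall i, r i 0 \is Num.real) /\
   (forall k, t l k = dotv (n k) r) /\ \sum_k `|t l k| <= B.
  have [r [rr [hr ht]]] := bloch (hrho l).
  exists r; split => //; split => [k|]; first exact: ht.
  rewrite (eq_bigr (fun k => `|dotv (n k) r|)); first exact: nbound.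
  by move=> k _; rewrite /t ht.
have dreal l k : d l k \is Num.real by rewrite rpredB // ger0_real.
have dle l k : `|d l k| <= 1.
  have := hp1 l k; rewrite sum2 => h.
  by rewrite -h (le_trans (ler_normB _ _)) // !ger0_norm.
have key : eta *+ 6 <= B.
  have -> : eta *+ 6 = \sum_(k < 6) eta by rewrite sumr_const card_ord.
  have -> : \sum_(k < 6) eta = \sum_(k < 6) \sum_l ka l * (- (d l k * t l k)).
    apply: eq_bigr => k _; rewrite -[eta]opprK -(Q k) L -sumrN.
    by apply: eq_bigr => l _; rewrite mulrN mulrA.
  rewrite exchange_big /=.
  apply: le_trans (_ : \sum_l ka l * B <= B); last by rewrite -mulr_suml hk1 mul1r.
  apply: ler_sum => l _; rewrite -mulr_sumr; apply: ler_wpM2l => //.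
  have [r [rr [ht hb]]] := tb l.
  apply: le_trans hb; apply: ler_sum => k _.
  have treal : t l k \is Num.real.
    by rewrite ht dotvE !rpredD ?rpredM ?nreal ?rr.
  apply: le_trans (real_ler_norm _) _; first by rewrite rpredN rpredM.
  rewrite normrN normrM.
  by rewrite -[X in _ <= X]mul1r ler_wpM2r ?normr_ge0.
have s5 : sqrtC (5%:R : C) * sqrtC 5%:R = 5%:R by rewrite -expr2 sqrtCK.
have sp : 0 < 1 + sqrtC (5%:R : C).
  by apply: (lt_le_trans ltr01); rewrite lerDl sqrtC_ge0 ler0n.
have s0 : 1 + sqrtC (5%:R : C) != 0 := lt0r_neq0 sp.
have -> : (3%:R + sqrtC 5%:R) / (3%:R * (1 + sqrtC 5%:R)) = B / 6%:R.
  rewrite /B /phi; apply/eqP; rewrite -subr_eq0; apply/eqP.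
  transitivity ((5%:R - sqrtC (5%:R : C) * sqrtC 5%:R) / (6%:R * (1 + sqrtC 5%:R))).
    by field.
  by rewrite s5 subrr mul0r.
rewrite ler_pdivlMr ?ltr0n // mulrC mulr_natl //.
Qed.
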